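(* Let $(K,C,S)$ be the associated layered simplicial complex of a divided simplicial complex. If $(K',C',S')$ and $(K'',C'',S'')$ are layered spines of $(K,C,S)$ whose polyhedra $X=|K'|$ and $Y=|K''|$ are filtered spaces with respective singular sets $\Sigma_X=|S'|$ and $\Sigma_Y=|S''|$ whose formal codimensions coincide, then the stratified spines $(X,\Sigma_X)$ and $(Y,\Sigma_Y)$ are stratified homotopy equivalent.
   Context: A simplicial complex $K$ is a set of finite nonempty sets (simplices) such that every nonempty subset (face) of a simplex of $K$ lies in $K$; $K^0$ is the set of vertices; $t<s$ means $t$ is a proper face of $s$; $|K|$ is the geometric realization. A simplex is principal in $K$ if it is not a proper face of any simplex of $K$. A simplex $s$ is free in $K$ if it is a proper face of a principal simplex $p$ of $K$ and of no other simplex of $K$. A layered simplicial complex is a triple $(K,C,S)$ where $C,S$ are disjoint subcomplexes of $K$; its intermediate simplices $\mathrm{IM}(K,C,S)$ are the simplices lying in neither $C$ nor $S$. A divided simplicial complex is a pair $(K,S^0)$ with $S^0\subseteq K^0$; its associated layered complex is $(K,C,S)$ with $S$ the simplices all of whose vertices lie in $S^0$ and $C$ those all of whose vertices lie in $K^0-S^0$. An elementary $S$-collapse replaces $(K,C,S)$ by $(K-\{s,p\},C,S-\{s,p\})$, where $p\in S$ is principal in $K$ and $s$ is a face of $p$ free in $K$; an elementary $C$-collapse is defined symmetrically with $p\in C$. For $(K,C,S)$ associated to a divided complex, an elementary intermediate collapse replaces it by $(K-\{s,p\},C,S)$, where (i) $p\in\mathrm{IM}(K,C,S)$, (ii) $p$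 is principal in $K$, (iii) $s$ is a face of $p$ free in $K$, (iv) every $t\in S$ with $t<p$ satisfies $t<s$. An elementary layered collapse is an elementary $S$-, $C$- or intermediate collapse. A layered spine of $(K,C,S)$ is a layered complex obtained from $(K,C,S)$ by a finite sequence of elementary layered collapses and admitting no further elementary layered collapse; the corresponding polyhedral pair $(|K'|,|S'|)$ is a stratified spine. A filtered space here is a pair $(X,\Sigma)$ of a Hausdorff space and closed subset, with a formal dimension $n$ of $X$ and a formal codimension $k\ge1$ of $\Sigma$. A stratified map $f:(X,\Sigma_X)\to(Y,\Sigma_Y)$ is continuous with $f(\Sigma_X)\subseteq\Sigma_Y$, $f(X-\Sigma_X)\subseteq Y-\Sigma_Y$; codimension-preserving if the formal codimensions agree. A stratified homotopy is a stratified map $(X\times I,\Sigma_X\times I)\to(Y,\Sigma_Y)$. A stratified homotopy equivalence is a codimension-preserving stratified map $f$ admitting a stratified $g$ with $g\circ f$, $f\circ g$ stratified homotopic to the identities. *)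

(* Defs.v *)
From HB Require Import structures.
From mathcomp Require Import all_boot all_order all_algebra.
From mathcomp Require Import all_classical all_reals all_analysis.
From mathcomp Require Import Rstruct Rstruct_topology.
Set Implicit Arguments. Unset Strict Implicit. Unset Printing Implicit Defensive.
Import Order.TTheory GRing.Theory Num.Theory.

Section Simplicial.
Variable T : finType.
Local Open Scope bool_scope.

Definition simplicial_complex (K : {set {set T}}) : Prop :=
  (forall s, s \in K -> s != finset.set0) /\
  (forall s t, s \in K -> t != finset.set0 -> t \subset s -> t \in K).

Definition proper_face (t s : {set T}) : bool := t \proper s.

Definition subcomplex (L K : {set {set T}}) : Prop :=
  L \subset K /\ simplicial_complex L.

Definition vertices (K : {set {set T}}) : {set T} := \bigcup_(s in K) s.

Definition principal (K : {set {set T}}) (s : {set T}) : Prop :=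
  s \in K /\ (forall t, t \in K -> ~~ proper_face s t).

Definition free_face (K : {set {set T}}) (s p : {set T}) : Prop :=
  s \in K /\ principal K p /\ proper_face s p /\
  (forall t, t \in K -> proper_face s t -> t = p).

Record layered := Layered { lK : {set {set T}}; lC : {set {set T}}; lS : {set {set T}} }.

Definition is_layered (L : layered) : Prop :=
  simplicial_complex (lK L) /\ subcomplex (lC L) (lK L) /\
  subcomplex (lS L) (lK L) /\ lC L :&: lS L = finset.set0.

Definition IM (L : layered) : {set {set T}} := lK L :\: (lC L :|: lS L).

Definition divided (K : {set {set T}}) (S0 : {set T}) : Prop :=
  simplicial_complex K /\ S0 \subset vertices K.

Definition assoc_layered (K : {set {set T}}) (S0 : {set T}) : layered :=
  Layered K [set s in K | s \subset ~: S0] [set s in K | s \subset S0].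

Definition is_associated (L : layered) : Prop :=
  exists S0 : {set T}, divided (lK L) S0 /\ L = assoc_layered (lK L) S0.

Inductive elem_collapse : layered -> layered -> Prop :=
| S_collapse (K C S : {set {set T}}) (s p : {set T}) :
    p \in S -> principal K p -> free_face K s p ->
    elem_collapse (Layered K C S) (Layered (K :\: (s |: finset.set1 p)) C (S :\: (s |: finset.set1 p)))
| C_collapse (K C S : {set {set T}}) (s p : {set T}) :
    p \in C -> principal K p -> free_face K s p ->
    elem_collapse (Layered K C S) (Layered (K :\: (s |: finset.set1 p)) (C :\: (s |: finset.set1 p)) S)
| IM_collapse (K C S : {set {set T}}) (s p : {set T}) :
    is_associated (Layered K C S) ->
    p \in IM (Layered K C S) -> principal K p -> free_face K s p ->
    (forall t, t \in S -> proper_face t p -> proper_face t s) ->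
    elem_collapse (Layered K C S) (Layered (K :\: (s |: finset.set1 p)) C S).

Inductive collapses : layered -> layered -> Prop :=
| collapses_refl L : collapses L L
| collapses_step L1 L2 L3 : elem_collapse L1 L2 -> collapses L2 L3 -> collapses L1 L3.

Definition layered_spine (L' L : layered) : Prop :=
  collapses L L' /\ (forall L'', ~ elem_collapse L' L'').

(* Points of |K| are barycentric coordinate functions T -> R (R = the reals)
   that are nonnegative, sum to 1 and whose support is a simplex of K.
   T -> R carries the MathComp-Analysis function topology (T is finite, so
   this is the Euclidean topology of R^T). *)
Local Open Scope ring_scope.
Local Open Scope classical_set_scope.

Definition ambient : topologicalType := {ptws T -> Rdefinitions.R}.

Definition realization (K : {set {set T}}) : set ambient :=
  [set x | (forall v, 0 <= x v) /\ \sum_(v : T) x v = 1 /\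
           finset (fun v => x v != 0) \in K].

End Simplicial.


Section Stratified.
Local Open Scope ring_scope.
Local Open Scope classical_set_scope.

(* (X, Sigma) filtered space inside a Hausdorff ambient space, with formal
   dimension n and formal codimension k >= 1 of Sigma *)
Definition filtered_space (E : topologicalType) (X Sigma : set E) (n k : nat) : Prop :=
  hausdorff_space E /\ Sigma `<=` X /\ closed Sigma /\ (1 <= k)%N.

Definition stratified_map (E F : topologicalType) (X SX : set E) (Y SY : set F) (f : E -> F) : Prop :=
  {within X, continuous f} /\ f @` X `<=` Y /\ f @` SX `<=` SY /\
  f @` (X `\` SX) `<=` Y `\` SY.

Definition unit_interval : set Rdefinitions.R := `[0%R, 1%R]%classic.

Definition stratified_homotopy (E F : topologicalType) (X SX : set E) (Y SY : set F)
    (H : E * Rdefinitions.R -> F) : Prop :=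
  @stratified_map (E * Rdefinitions.R)%type F (X `*` unit_interval) (SX `*` unit_interval) Y SY H.

Definition stratified_homotopic (E F : topologicalType) (X SX : set E) (Y SY : set F) (f g : E -> F) : Prop :=
  exists H : E * Rdefinitions.R -> F, stratified_homotopy X SX Y SY H /\
    (forall x, X x -> H (x, 0) = f x) /\ (forall x, X x -> H (x, 1) = g x).

End Stratified.

Definition stratified_homotopy_equivalence (E F : topologicalType)
    (X SX : set E) (kX : nat) (Y SY : set F) (kY : nat) (f : E -> F) : Prop :=
  kX = kY /\ stratified_map X SX Y SY f /\
  exists g : F -> E, stratified_map Y SY X SX g /\
    stratified_homotopic X SX X SX (g \o f) id /\
    stratified_homotopic Y SY Y SY (f \o g) id.

Definition stratified_homotopy_equivalent (E F : topologicalType)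
    (X SX : set E) (kX : nat) (Y SY : set F) (kY : nat) : Prop :=
  exists f : E -> F, stratified_homotopy_equivalence X SX kX Y SY kY f.

(* Main.v *)
Require Import Defs.
From HB Require Import structures.
From mathcomp Require Import all_boot all_order all_algebra.
From mathcomp Require Import all_classical all_reals all_analysis.
From mathcomp Require Import Rstruct Rstruct_topology.
Set Implicit Arguments. Unset Strict Implicit. Unset Printing Implicit Defensive.
Import Order.TTheory GRing.Theory Num.Theory.
Local Open Scope ring_scope.
Local Open Scope classical_set_scope.
From mathcomp Require Import lra.
Notation RR := Rdefinitions.R.

Lemma ptws_cont (T : finType) (X : topologicalType) (F : X -> ambient T) :
  (forall v, continuous (fun z => F z v : RR)) -> continuous F.
Proof. move=> H x; apply: (iffRL (@pointwise_cvgP (discrete_topology T) RR _ (F x) _)) => v; exact: H. Qed.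

Lemma proj_cont (T : finType) (v : T) : continuous (fun g : ambient T => (g v : RR)).
Proof. exact: (@proj_continuous T (fun _ => RR) v). Qed.

Lemma min_cont (X : topologicalType) (f g : X -> RR) : continuous f -> continuous g ->
  continuous (fun z => Num.min (f z) (g z)).
Proof. move=> cf cg x. exact: (continuous_min (cf x) (cg x)). Qed.

Lemma add_cont (X : topologicalType) (f g : X -> RR) : continuous f -> continuous g ->
  continuous (fun z => f z + g z).
Proof. move=> cf cg x. exact: (@continuousD _ RR^o _ f g x (cf x) (cg x)). Qed.
Lemma mul_cont (X : topologicalType) (f g : X -> RR) : continuous f -> continuous g ->
  continuous (fun z => f z * g z).
Proof. move=> cf cg x. exact: (@continuousM RR X f g x (cf x) (cg x)). Qed.
Lemma opp_cont (X : topologicalType) (f : X -> RR) : continuous f -> 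
  continuous (fun z => - f z).
Proof. move=> cf x. exact: (@continuousN _ RR^o _ f x (cf x)). Qed.
Lemma fst_cont (X Y : topologicalType) : continuous (@fst X Y).
Proof. move=> x. exact: cvg_fst. Qed.
Lemma snd_cont (X Y : topologicalType) : continuous (@snd X Y).
Proof. move=> x. exact: cvg_snd. Qed.
Lemma pair_cont (X Y Z : topologicalType) (f : X -> Y) (g : X -> Z) : continuous f -> continuous g -> continuous (fun z => (f z, g z)).
Proof. move=> cf cg x. exact: (cvg_pair (cf x) (cg x)). Qed.
Lemma comp_cont (X Y Z : topologicalType) (f : X -> Y) (g : Y -> Z) : continuous f -> continuous g -> continuous (fun z => g (f z)).
Proof. move=> cf cg x. exact: (continuous_comp (cf x) (cg (f x))). Qed.
Arguments fst_cont {X Y}. Arguments snd_cont {X Y}.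
Lemma max_cont (X : topologicalType) (f g : X -> RR) : continuous f -> continuous g ->
  continuous (fun z => Num.max (f z) (g z)).
Proof. move=> cf cg x. exact: (continuous_max (cf x) (cg x)). Qed.
Lemma cst_cont' (X Y : topologicalType) (c : Y) : continuous (fun _ : X => c).
Proof. move=> x; exact: cvg_cst. Qed.

Section Main.
Variable T : finType.
Local Notation A := (ambient T).

Definition supp (x : A) : {set T} := finset (fun v => x v != 0).
Definition sing (S0 : {set T}) (x : A) : bool := supp x \subset S0.

Record Good (K K2 : {set {set T}}) S0 (R : A -> A) (G : A * RR -> A) : Prop := MkGood {
   g_cR : continuous R; g_cG : continuous G;
   g_R1 : forall x, realization K x -> realization K2 (R x) /\ sing S0 (R x) = sing S0 x;
   g_R2 : forall x, realization K2 x -> R x = x;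
   g_G1 : forall x t, realization K x -> 0 <= t <= 1 ->
       realization K (G (x,t)) /\ sing S0 (G (x,t)) = sing S0 x;
   g_G0 : forall x, G (x,0) = x;
   g_G2 : forall x, realization K x -> G (x,1) = R x }.

Lemma real_sub (K K2 : {set {set T}}) x : K2 \subset K -> realization K2 x -> realization K x.
Proof. move=> sK [h1 [h2 h3]]; split=> //; split=> //; exact: (fintype.subsetP sK). Qed.

Lemma good_refl K S0 : Good K K S0 id (fun z => z.1).
Proof.
split=> //; [by move=> x; exact: cvg_id | exact: (@fst_cont A RR)].
Qed.

Definition clampA (t : RR) : RR := Num.min 1 (2 * t).
Definition clampB (t : RR) : RR := Num.max 0 (2 * t - 1).

Lemma good_comp (K1 K2 K3 : {set {set T}}) S0 r h R G : K2 \subset K1 -> K3 \subset K2 ->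
  Good K1 K2 S0 r h -> Good K2 K3 S0 R G ->
  Good K1 K3 S0 (fun x => R (r x)) (fun z => G (h (z.1, clampA z.2), clampB z.2)).
Proof.
move=> s21 s32 [cr ch hr1 hr2 hh1 hh2 hh3] [cR cG hR1 hR2 hG1 hG2 hG3]; split.
- exact: comp_cont.
- apply: comp_cont cG; apply: pair_cont.
    apply: comp_cont ch; apply: pair_cont; first exact: fst_cont.
    apply: comp_cont snd_cont _; apply: min_cont; first exact: cst_cont'.
    apply: mul_cont; [exact: cst_cont'| by move=> ?].
  apply: comp_cont snd_cont _; apply: max_cont; first exact: cst_cont'.
  apply: add_cont; last exact: cst_cont'.
  apply: mul_cont; [exact: cst_cont'| by move=> ?].
- move=> x Kx; have [K2r e1] := hr1 x Kx; have [K3R e2] := hR1 _ K2r.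
  by split=> //; rewrite e2 e1.
- move=> x K3x; have K2x := real_sub s32 K3x.
  by rewrite hr2 // hR2.
- move=> x t Kx /andP[t0 t1] /=.
  have [b0|[a1 b01]] : (clampB t = 0 /\ 0 <= clampA t <= 1) \/ (clampA t = 1 /\ 0 <= clampB t <= 1).
    rewrite /clampA /clampB; case: (leP (2 * t) 1) => H.
      left; case: (leP 1 (2*t)) => H1; case: (leP 0 (2*t-1)) => H2; split; try lra; apply/andP; split; lra.
    right; case: (leP 1 (2*t)) => H1; case: (leP 0 (2*t-1)) => H2; split; try lra; apply/andP; split; lra.
    by case: b0 => -> a01; rewrite hG2; exact: hh1.
  rewrite a1 hh3 //; have [K2r e1] := hr1 x Kx; have [hg e2] := hG1 _ _ K2r b01.
  by split; [exact: real_sub s21 hg | rewrite e2 e1].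
- move=> x /=; rewrite /clampA /clampB mulr0 sub0r.
  rewrite (_ : Num.min 1 0 = 0 :> RR); last by rewrite /Num.min; case: ifP => //; lra.
  rewrite (_ : Num.max 0 (-1) = 0 :> RR); last by rewrite /Num.max; case: ifP => //; lra.
  by rewrite hh2 hG2.
- move=> x Kx /=; rewrite /clampA /clampB mulr1.
  rewrite (_ : Num.min 1 2 = 1 :> RR); last by rewrite /Num.min; case: ifP => //; lra.
  rewrite (_ : Num.max 0 (2-1) = 1 :> RR); last by rewrite /Num.max; case: ifP => //; lra.
  rewrite hh3 // hG3 //; exact: (hr1 x Kx).1.
Qed.

Definition mfun (s : {set T}) (v0 : T) (x : A) : RR :=
  foldr (fun v acc => Num.min (x v) acc) (x v0) (enum s).

Lemma mfun_le (s : {set T}) v0 (x : A) v : v \in s -> mfun s v0 x <= x v.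
Proof.
rewrite -mem_enum /mfun; elim: (enum s) => [|a l IH] //= .
rewrite in_cons => /orP[/eqP ->|vl]; rewrite ge_min; apply/orP; [by left|right; exact: IH].
Qed.

Lemma mfun_eq (s : {set T}) v0 (x : A) : v0 \in s -> exists2 v, v \in s & mfun s v0 x = x v.
Proof.
move=> hv0; rewrite /mfun.
suff [v vl ->] : exists2 v, (v == v0) || (v \in enum s) & foldr (fun v acc => Num.min (x v) acc) (x v0) (enum s) = x v.
  by exists v => //; case/orP: vl => [/eqP ->|]; rewrite ?mem_enum.
elim: (enum s) => [|a l [w wl IH]] /=; first by exists v0; rewrite ?eqxx.
rewrite IH; case: (leP (x a) (x w)) => _.
  by exists a; rewrite // in_cons eqxx orbT.
by exists w => //; move: wl; rewrite in_cons => /orP[->|->]; rewrite ?orbT.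
Qed.

Lemma mfun_cont (s : {set T}) v0 : continuous (mfun s v0).
Proof.
rewrite /mfun; elim: (enum s) => [|a l IH] /=; first exact: proj_cont.
by apply: min_cont; [exact: proj_cont|exact: IH].
Qed.

Definition cc (s p : {set T}) : RR := #|s|%:R / #|p :\: s|%:R.

Definition dvec (s p : {set T}) (v : T) : RR :=
  (if v \in s then 1 else 0) - (if v \in p :\: s then cc s p else 0).

Definition hfun (s p : {set T}) (v0 : T) (z : A * RR) : A :=
  (fun v => z.1 v - z.2 * mfun s v0 z.1 * dvec s p v) : A.

Lemma hfun_cont (s p : {set T}) v0 : continuous (hfun s p v0).
Proof.
apply: ptws_cont => v; rewrite /hfun /=.
apply: add_cont; first exact: (comp_cont (@fst_cont A RR) (@proj_cont T v)).
apply: opp_cont; apply: mul_cont; last exact: cst_cont'.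
apply: mul_cont; first exact: snd_cont.
exact: (comp_cont (@fst_cont A RR) (@mfun_cont s v0)).
Qed.

Lemma sum_dvec (s p : {set T}) : s \proper p -> \sum_v dvec s p v = 0.
Proof.
move=> sp; rewrite /dvec sumrB -!big_mkcond /= !sumr_const.
have q0 : #|p :\: s|%:R != 0 :> RR.
  rewrite pnatr_eq0 -lt0n; case/properP: sp => _ [v vp vs].
  by apply/card_gt0P; exists v; rewrite !inE vs vp.
by rewrite /cc -mulr_natr !mul1r -[_ / _ *+ _]mulr_natr divfK // subrr.
Qed.

Section Elem.
Variables (K : {set {set T}}) (S0 s p : {set T}) (v0 : T).
Hypothesis Hfc : forall sg tau : {set T}, sg \in K -> tau != finset.set0 -> tau \subset sg -> tau \in K.
Hypothesis Hfree : free_face K s p.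
Hypothesis Hcond : forall w : {set T}, w \subset p -> (s \subset w) || (p :\: s \subset w) ->
  (w \subset S0) = (p \subset S0).
Hypothesis Hv0 : v0 \in s.

Local Notation q := (p :\: s).
Local Notation m := (mfun s v0).
Local Notation h := (hfun s p v0).

Lemma sp_ : s \proper p.
Proof. by case: Hfree => _ [_ [H _]]. Qed.
Lemma pK : p \in K.
Proof. by case: Hfree => _ [[H _] _]. Qed.
Lemma sp_sub : s \subset p.
Proof. exact: proper_sub sp_. Qed.
Lemma q_ne : exists v, v \in q.
Proof. by case/properP: sp_ => _ [v vp vs]; exists v; rewrite !inE vs vp. Qed.

Lemma cc_pos : 0 < cc s p.
Proof.
rewrite /cc divr_gt0 // ltr0n; apply/card_gt0P; first by exists v0.
by have [v vq] := q_ne; exists v.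
Qed.

Lemma dvec_s v : v \in s -> dvec s p v = 1.
Proof. by move=> vs; rewrite /dvec vs !inE vs /= subr0. Qed.
Lemma dvec_q v : v \in q -> dvec s p v = - cc s p.
Proof. by move=> vq; move: (vq); rewrite !inE => /andP[/negbTE vs _]; rewrite /dvec vs vq sub0r. Qed.
Lemma dvec_out v : v \notin p -> dvec s p v = 0.
Proof.
move=> vp; have vs : v \notin s by apply: contra vp; apply: (fintype.subsetP sp_sub).
by rewrite /dvec (negbTE vs) !inE (negbTE vp) andbF subrr.
Qed.

Lemma free_sup u : u \in K -> s \subset u -> u = s \/ u = p.
Proof.
move=> uK su; case: (eqVneq u s) => [->|ne]; [by left|right].
case: Hfree => _ [_ [_ H]]; apply: H => //.
by rewrite /proper_face finset.properEneq eq_sym ne.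
Qed.

Lemma m_ge0 (x : A) : (forall v, 0 <= x v) -> 0 <= m x.
Proof. by move=> nn; have [v _ ->] := @mfun_eq s v0 x Hv0. Qed.

Lemma m_zero (x : A) : (forall v, 0 <= x v) -> ~~ (s \subset supp x) -> m x = 0.
Proof.
move=> nn /fintype.subsetPn [v vs]; rewrite inE negbK => /eqP xv.
have := @mfun_le s v0 x _ vs; have := m_ge0 nn; rewrite xv; lra.
Qed.

Lemma m_pos (x : A) : (forall v, 0 <= x v) -> s \subset supp x -> 0 < m x.
Proof.
move=> nn ss; have [v vs ->] := @mfun_eq s v0 x Hv0.
have := fintype.subsetP ss v vs; rewrite inE => xv.
by rewrite lt_def xv nn.
Qed.

Lemma h_m0 (x : A) t : m x = 0 -> h (x,t) = x.
Proof. by move=> m0; apply: boolp.funext => v; rewrite /hfun /= m0 mulr0 mul0r subr0. Qed.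
Lemma h_t0 (x : A) : h (x,0) = x.
Proof. by apply: boolp.funext => v; rewrite /hfun /= !mul0r subr0. Qed.

Lemma h_sum (x : A) t : \sum_v h (x,t) v = \sum_v x v.
Proof. by rewrite /hfun /= sumrB -mulr_sumr sum_dvec ?sp_ // mulr0 subr0. Qed.

Lemma supp_facts (x : A) : realization K x -> 0 < m x ->
  [/\ s \subset supp x, supp x \subset p & (supp x = s \/ supp x = p)].
Proof.
move=> [nn [_ uK]] mpos.
have su : s \subset supp x.
  case: (boolP (s \subset supp x)) => // /(m_zero nn) m0; move: mpos; rewrite m0; lra.
have e := free_sup uK su; split => //.
by rewrite /supp; case: e => ->; rewrite ?sp_sub.
Qed.

Lemma h_supp (x : A) t : realization K x -> 0 < m x -> 0 < t -> t <= 1 ->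
  [/\ (forall v, 0 <= h (x,t) v), supp (h (x,t)) \subset p & q \subset supp (h (x,t))].
Proof.
move=> Kx mpos t0 t1; have [nn _] := Kx; have [su up _] := supp_facts Kx mpos.
have cp := cc_pos.
split.
- move=> v; rewrite /hfun /=; case: (boolP (v \in s)) => vs.
    rewrite (dvec_s vs) mulr1; have := @mfun_le s v0 x _ vs.
    have : 0 <= (1 - t) * m x by apply: mulr_ge0; lra.
    lra.
  case: (boolP (v \in q)) => vq.
    rewrite (dvec_q vq); have := nn v.
    have : 0 <= t * m x * cc s p by apply: mulr_ge0; [apply: mulr_ge0|]; lra.
    lra.
  have vp : v \notin p by move: vq; rewrite !inE vs.
  by rewrite dvec_out // mulr0 subr0.
- apply/fintype.subsetP => v; rewrite inE; apply: contraR => vp.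
  rewrite /hfun /= dvec_out // mulr0 subr0.
  have : v \notin supp x by apply: contra vp; apply: (fintype.subsetP up).
  by rewrite inE negbK.
- apply/fintype.subsetP => v vq; rewrite inE /hfun /= dvec_q //.
  have H : 0 < x v - t * m x * - cc s p.
    have := nn v; have : 0 < t * m x * cc s p by apply: mulr_gt0; [apply: mulr_gt0|].
    lra.
  by rewrite gt_eqF.
Qed.

Lemma h_real (x : A) t : realization K x -> 0 <= t <= 1 ->
  realization K (h (x,t)) /\ sing S0 (h (x,t)) = sing S0 x.
Proof.
move=> Kx /andP[t0 t1]; have [nn [s1 uK]] := Kx.
have := m_ge0 nn; rewrite le_eqVlt => /orP[/eqP m0|mpos].
  by rewrite h_m0.
move: t0; rewrite le_eqVlt => /orP[/eqP <-|tpos]; first by rewrite h_t0.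
have [nn' wp qw] := h_supp Kx mpos tpos t1.
have [su up _] := supp_facts Kx mpos.
split.
  split => //; split; first by rewrite h_sum.
  apply: (Hfc pK _ wp); apply/finset.set0Pn; have [v vq] := q_ne; exists v.
  exact: (fintype.subsetP qw).
by rewrite /sing (Hcond wp) ?qw ?orbT // (Hcond up) ?su.
Qed.

Lemma r_real (x : A) : realization K x ->
  realization (K :\: (s |: [set p])) (h (x,1)) /\ sing S0 (h (x,1)) = sing S0 x.
Proof.
move=> Kx; have [[nn [s1 wK]] e] := h_real Kx (t:=1) (ltac:(apply/andP; split; lra)).
split => //; split => //; split => //.
rewrite !inE wK andbT negb_or; have [nx _] := Kx.
have := m_ge0 nx; rewrite le_eqVlt => /orP[/eqP m0|mpos].
  rewrite h_m0 //.
  have nsu : ~~ (s \subset supp x).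
    by apply/negP => /(m_pos nx); rewrite -m0 ltxx.
  apply/andP; split; apply/negP => /eqP E; move: nsu; rewrite /supp E ?subxx //.
  by rewrite sp_sub.
have [_ _ qw] := h_supp Kx mpos ltr01 (lexx _).
have [v vq] := q_ne.
apply/andP; split; apply/negP => /eqP E.
  have := fintype.subsetP qw v vq; rewrite /supp E; move: vq; rewrite !inE => /andP[/negbTE -> _].
  by [].
have [w ws xw] := @mfun_eq s v0 x Hv0.
have : w \in supp (h (x,1)) by rewrite /supp E; exact: (fintype.subsetP sp_sub).
by rewrite inE /hfun /= dvec_s // mul1r mulr1 -xw subrr eqxx.
Qed.

Lemma r_id (x : A) : realization (K :\: (s |: [set p])) x -> h (x,1) = x.
Proof.
move=> [nn [_ uK]]; move: uK; rewrite !inE negb_or => /andP[/andP[ns np] uK].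
apply: h_m0; apply: m_zero => //; apply/negP => su.
by case: (free_sup uK su) => E; move: ns np; rewrite E eqxx.
Qed.

Lemma elem_good : Good K (K :\: (s |: [set p])) S0 (fun x => h (x,1)) h.
Proof.
split.
- apply: (comp_cont _ (@hfun_cont s p v0)); apply: pair_cont; last exact: cst_cont'.
  by move=> ?; exact: cvg_id.
- exact: hfun_cont.
- exact: r_real.
- exact: r_id.
- move=> x t Kx t01; exact: h_real.
- exact: h_t0.
- by [].
Qed.

End Elem.

Definition faceclosed (K : {set {set T}}) : Prop :=
  forall sg tau : {set T}, sg \in K -> tau != finset.set0 -> tau \subset sg -> tau \in K.
Definition nonemptyK (K : {set {set T}}) : Prop :=
  forall sg, sg \in K -> sg != finset.set0.

Definition Inv (S0 : {set T}) (L : layered T) : Prop :=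
  [/\ (forall sg, sg \in lC L -> sg \subset ~: S0), lS L = [set sg in lK L | sg \subset S0],
      nonemptyK (lK L) & faceclosed (lK L)].

Lemma good_of (K : {set {set T}}) (S0 s p : {set T}) : nonemptyK K -> faceclosed K -> free_face K s p ->
  (forall w : {set T}, w \subset p -> (s \subset w) || (p :\: s \subset w) ->
     (w \subset S0) = (p \subset S0)) ->
  exists R G, Good K (K :\: [set s; p]) S0 R G.
Proof.
move=> ne fc fr hc; have [sK _] := fr.
have /finset.set0Pn [v0 v0s] := ne _ sK.
by exists (fun x => hfun s p v0 (x, 1)), (hfun s p v0); exact: elem_good.
Qed.

Lemma inv_K (K : {set {set T}}) (s p : {set T}) : nonemptyK K -> faceclosed K -> free_face K s p ->
  nonemptyK (K :\: [set s; p]) /\ faceclosed (K :\: [set s; p]).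
Proof.
move=> ne fc [sK [[pK pr] [sp fre]]]; split.
  by move=> sg; rewrite !inE => /andP[_]; exact: ne.
move=> sg tau; rewrite !inE => /andP[nsg sgK] tne ts; rewrite (fc _ _ sgK tne ts) andbT.
move: nsg; rewrite negb_or => /andP[ns np].
apply/negP => /orP[/eqP E|/eqP E]; subst tau.
  have := fre _ sgK; rewrite /proper_face finset.properEneq eq_sym ns ts => /(_ isT) E.
  by move: np; rewrite E eqxx.
have := pr _ sgK; rewrite /proper_face finset.properEneq eq_sym np ts.
by [].
Qed.

Lemma ne_notsub (w S0 : {set T}) : w != finset.set0 -> w \subset ~: S0 -> ~~ (w \subset S0).
Proof.
move=> /finset.set0Pn [v vw] wc; apply/negP => ws.
have := fintype.subsetP wc v vw; rewrite inE (fintype.subsetP ws v vw).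
by [].
Qed.

Lemma free_ne (K : {set {set T}}) (s p : {set T}) : nonemptyK K -> free_face K s p -> forall w : {set T},
  (s \subset w) || (p :\: s \subset w) -> w != finset.set0.
Proof.
move=> ne [sK [_ [sp _]]] w /orP[sw|qw].
  have /finset.set0Pn [v vs] := ne _ sK; apply/finset.set0Pn; exists v.
  exact: (fintype.subsetP sw).
case/properP: sp => _ [v vp vs]; apply/finset.set0Pn; exists v.
by apply: (fintype.subsetP qw); rewrite !inE vs vp.
Qed.

Lemma elem_step (S0 : {set T}) L1 L2 : Inv S0 L1 -> elem_collapse L1 L2 ->
  Inv S0 L2 /\ lK L2 \subset lK L1 /\ exists R G, Good (lK L1) (lK L2) S0 R G.
Proof.
move=> [hC hS ne fc] ec.
have subD : forall (K : {set {set T}}) X, K :\: X \subset K by move=> ? ?; exact: finset.subsetDl.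
case: ec hC hS ne fc => /=.
-
  move=> K C S s p pS _ fr hC hS ne fc.
  have pS0 : p \subset S0 by move: pS; rewrite hS inE => /andP[].
  have [ne' fc'] := inv_K ne fc fr.
  split; [|split; [exact: subD|]].
    split => //=; rewrite hS; apply/finset.setP => sg; rewrite !inE.
    by rewrite andbA.
  apply: good_of => // w wp _.
  by rewrite pS0 (fintype.subset_trans wp pS0).
-
  move=> K C S s p pC _ fr hC hS ne fc.
  have pc := hC _ pC.
  have [ne' fc'] := inv_K ne fc fr.
  have [sK [[pK _] [sp _]]] := fr.
  have nS : forall w : {set T}, (s \subset w) || (p :\: s \subset w) -> w \subset p ->
      ~~ (w \subset S0).
    move=> w hw wp; apply: ne_notsub; first exact: (free_ne ne fr hw).
    exact: fintype.subset_trans wp pc.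
  split; [|split; [exact: subD|]].
    split => //=.
      by move=> sg; rewrite inE => /andP[_]; exact: hC.
    rewrite hS; apply/finset.setP => sg; rewrite !inE.
    case: (boolP (sg \in K)) => //= sgK; rewrite ?andbF //.
    case: (boolP (sg \subset S0)); rewrite ?andbF ?andbT // => sgS.
    apply/esym/negP => /orP[/eqP E|/eqP E]; subst sg.
      by move: (nS s); rewrite subxx (proper_sub sp) sgS => /(_ isT isT).
    by move: (nS p); rewrite subxx (proper_sub sp) sgS => /(_ isT isT).
  apply: good_of => // w wp hw.
  by rewrite (negbTE (nS _ hw wp)) (negbTE (nS p _ (subxx _))) // (proper_sub sp).
-
  move=> K C S s p _ pIM _ fr hcond hC hS ne fc.
  have [ne' fc'] := inv_K ne fc fr.
  have [sK [[pK _] [sp _]]] := fr.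
  have pnS : ~~ (p \subset S0).
    apply/negP => pS0; move: pIM; rewrite /IM /= !inE pK hS inE pK pS0.
    by rewrite orbT.
  have snS : ~~ (s \subset S0).
    apply/negP => sS0; have sS : s \in S by rewrite hS inE sK sS0.
    have := hcond _ sS sp; rewrite /proper_face.
    by rewrite finset.properEneq eqxx.
  split; [|split; [exact: subD|]].
    split => //=.
    rewrite hS; apply/finset.setP => sg; rewrite !inE.
    case: (boolP (sg \in K)) => //= sgK; rewrite ?andbF //.
    case: (boolP (sg \subset S0)); rewrite ?andbF ?andbT // => sgS.
    by apply/esym/negP => /orP[/eqP E|/eqP E]; subst sg; [move: snS|move: pnS]; rewrite sgS.
  apply: good_of => // w wp hw; rewrite (negbTE pnS).
  apply/negbTE/negP => wS0.
  have wne := free_ne ne fr hw.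
  have wK : w \in K := fc _ _ pK wne wp.
  have wS : w \in S by rewrite hS inE wK wS0.
  case: (eqVneq w p) => [E|wnp]; first by move: pnS; rewrite -E wS0.
  have wpp : proper_face w p by rewrite /proper_face finset.properEneq wnp wp.
  have := hcond _ wS wpp; rewrite /proper_face finset.properEneq => /andP[wns ws].
  case/orP: hw => [sw|qw].
    by move: wns; rewrite finset.eqEsubset ws sw.
  case/properP: sp => _ [v vp vs].
  have : v \in w by apply: (fintype.subsetP qw); rewrite !inE vs vp.
  by move/(fintype.subsetP ws); rewrite (negbTE vs).
Qed.

Lemma coll_good (S0 : {set T}) L1 L2 : collapses L1 L2 -> Inv S0 L1 ->
  Inv S0 L2 /\ lK L2 \subset lK L1 /\ exists R G, Good (lK L1) (lK L2) S0 R G.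
Proof.
elim => [L|La Lb Lc e _ IH] inv.
  by split => //; split => //; exists id, (fun z => z.1); exact: good_refl.
have [invb [sba [r [h gr]]]] := elem_step inv e.
have [invc [scb [R [G gR]]]] := IH invb.
split => //; split; first exact: fintype.subset_trans scb sba.
by exists (fun x => R (r x)), (fun z => G (h (z.1, clampA z.2), clampB z.2)); exact: (good_comp sba scb gr gR).
Qed.

End Main.

Lemma real_S (T : finType) (K : {set {set T}}) (S0 : {set T}) (x : ambient T) :
  realization [set sg in K | sg \subset S0] x <-> realization K x /\ sing S0 x.
Proof.
rewrite /realization /sing /supp /=; split.
  by move=> [a [b]]; rewrite inE => /andP[c d].
by move=> [[a [b c]] d]; split => //; split => //; rewrite inE c d.
Qed.

Lemma unit_I (t : RR) : unit_interval t -> 0 <= t <= 1.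
Proof. by rewrite /unit_interval /= in_itv /=. Qed.

Lemma smap (T : finType) (K1 K2 KL : {set {set T}}) (S0 : {set T}) R G :
  Good K1 K2 S0 R G -> KL \subset K1 ->
  stratified_map (realization KL) (realization [set sg in KL | sg \subset S0])
    (realization K2) (realization [set sg in K2 | sg \subset S0]) R.
Proof.
move=> g sub; split; [|split; [|split]].
- apply: continuous_subspaceT; exact: (g_cR g).
- by move=> _ [x Xx <-]; exact: (g_R1 g (real_sub sub Xx)).1.
- move=> _ [x /real_S [Xx sx] <-]; have [h1 h2] := g_R1 g (real_sub sub Xx).
  by apply/real_S; split => //; rewrite h2.
- move=> _ [x [Xx nsx] <-]; have [h1 h2] := g_R1 g (real_sub sub Xx).
  split => // /real_S [_ sR]; apply: nsx; apply/real_S; split => //; by rewrite -h2.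
Qed.

Lemma shom (T : finType) (K K' K'' : {set {set T}}) (S0 : {set T}) R' G' R'' G'' :
  Good K K' S0 R' G' -> Good K K'' S0 R'' G'' -> K' \subset K ->
  stratified_homotopic (realization K') (realization [set sg in K' | sg \subset S0])
    (realization K') (realization [set sg in K' | sg \subset S0]) (R' \o R'') id.
Proof.
move=> g1 g2 sub.
pose H := fun z : ambient T * RR => R' (G'' (z.1, 1 - z.2)).
have cH : continuous H.
  apply: comp_cont (g_cR g1); apply: comp_cont (g_cG g2).
  apply: pair_cont; first exact: fst_cont.
  by apply: add_cont; [exact: cst_cont' | apply: opp_cont; exact: snd_cont].
have key : forall x t, realization K' x -> 0 <= t <= 1 ->
    realization K' (H (x,t)) /\ sing S0 (H (x,t)) = sing S0 x.
  move=> x t Xx /andP[t0 t1].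
  have [a b] := g_G1 g2 (real_sub sub Xx) (t := 1 - t) (ltac:(apply/andP; split; lra)).
  have [c d] := g_R1 g1 a.
  by split => //; rewrite /H /= d b.
exists H; split; [|split].
- split; [|split; [|split]].
  + exact: continuous_subspaceT.
  + by move=> _ [[x t] [Xx /unit_I It] <-]; exact: (key x t Xx It).1.
  + move=> _ [[x t] [/real_S [Xx sx] /unit_I It] <-]; have [a b] := key x t Xx It.
    by apply/real_S; split => //; rewrite b.
  + move=> _ [[x t] [[Xx It] nS] <-]; have [a b] := key x t Xx (unit_I It).
    split => // /real_S [_ sH]; apply: nS; split => //; apply/real_S; split => //.
    by rewrite -b.
- by move=> x Xx; rewrite /H /= subr0 (g_G2 g2) //; exact: real_sub sub Xx.
- by move=> x Xx; rewrite /H /= subrr (g_G0 g2) (g_R2 g1).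
Qed.

Unset Implicit Arguments.
Theorem corollary6p3 (T : finType) (K : {set {set T}}) (S0 : {set T})
    (L' L'' : layered T) (nX kX nY kY : nat) :
  divided K S0 ->
  layered_spine L' (assoc_layered K S0) ->
  layered_spine L'' (assoc_layered K S0) ->
  filtered_space (realization (lK L')) (realization (lS L')) nX kX ->
  filtered_space (realization (lK L'')) (realization (lS L'')) nY kY ->
  kX = kY ->
  stratified_homotopy_equivalent
    (realization (lK L')) (realization (lS L')) kX
    (realization (lK L'')) (realization (lS L'')) kY.
Proof.
move=> [[ne fc] _] [c1 _] [c2 _] _ _ ek.
have inv0 : Inv S0 (assoc_layered K S0).
  by split => //=; move=> sg; rewrite inE => /andP[].
have [[_ HS1 _ _] [sub1 [R1 [G1 g1]]]] := coll_good c1 inv0.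
have [[_ HS2 _ _] [sub2 [R2 [G2 g2]]]] := coll_good c2 inv0.
rewrite HS1 HS2; exists R2; split => //; split; first exact: smap g2 sub1.
exists R1; split; first exact: smap g1 sub2.
split; [exact: shom g1 g2 sub1 | exact: shom g2 g1 sub2].
Qed.
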